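(* Let $R$ be a semisimple commutative ring, $M$ an $R$-module and $C$ an $R$-linear relation on $M$. The following are equivalent: (1) there exists a reduction $(X\mid\rho)$ of $(M,C)$ that meets in the radical; (2) $C^\sharp=C^\flat\oplus Y$ for some $R$-submodule $Y$ carrying an $R[T,T^{-1}]$-module structure (extending its $R$-module structure) such that, for $y,z\in Y$, $Ty=z$ if and only if $z\in Cy$.
   Context: An $R$-linear relation on $M$ is an $R$-submodule $C\subseteq M\oplus M$; $Cm=\{m':(m,m')\in C\}$, $C^{-1}=\{(y,x):(x,y)\in C\}$. $C''$ is the set of $m\in M$ for which there is $(m_n)_{n\in\mathbb{N}}$ in $M$ with $m_0=m$ and $m_{n+1}\in Cm_n$ for all $n$; $C'$ is the set of those $m$ for which such a sequence exists with $m_n=0$ for $n\gg0$; $C^\sharp=C''\cap(C^{-1})''$; $C^\flat=C''\cap(C^{-1})'+(C^{-1})''\cap C'$. A reduction of $(M,C)$ is a pair $(X\mid\rho)$ with $X$ an $R[T,T^{-1}]$-module and $\rho\colon X\to M$ $R$-linear such that $C^\sharp=C^\flat+\mathrm{im}(\rho)$ and $\rho(Tx)\in C\rho(x)$ for all $x\in X$; it meets in the radical if $\{x\in X:\rho(x)\in C^\flat\}=\mathrm{rad}(X)$, the radical of $X$ as an $R$-module. *)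

(* Defs.v *)
From mathcomp Require Import all_boot all_order all_algebra.
Set Implicit Arguments. Unset Strict Implicit. Unset Printing Implicit Defensive.
Import GRing.Theory.
Local Open Scope ring_scope.

Definition is_ideal (R : comPzRingType) (I : R -> Prop) : Prop :=
  I 0 /\ (forall a b, I a -> I b -> I (a + b)) /\ (forall r a, I a -> I (r * a)).

(* R is semisimple: R is semisimple as a module over itself, i.e. every
   ideal is a direct summand of R. *)
Definition semisimple_ring (R : comPzRingType) : Prop :=
  forall I : R -> Prop, is_ideal I ->
    exists J : R -> Prop, is_ideal J /\
      (forall r : R, exists a b, I a /\ J b /\ r = a + b) /\
      (forall r : R, I r -> J r -> r = 0).

Definition is_submod (R : pzRingType) (V : lmodType R) (S : V -> Prop) : Prop :=
  S 0 /\ (forall u v, S u -> S v -> S (u + v)) /\ (forall (r : R) v, S v -> S (r *: v)).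

Definition is_linrel (R : pzRingType) (M : lmodType R) (C : M -> M -> Prop) : Prop :=
  C 0 0 /\ (forall m1 m2 n1 n2, C m1 m2 -> C n1 n2 -> C (m1 + n1) (m2 + n2)) /\
  (forall (r : R) m1 m2, C m1 m2 -> C (r *: m1) (r *: m2)).

Section LinRel.
Variables (R : pzRingType) (M : lmodType R).
Implicit Types (C : M -> M -> Prop).

Definition rel_inv C : M -> M -> Prop := fun x y => C y x.

Definition rel_dd C (m : M) : Prop :=
  exists f : nat -> M, f 0%N = m /\ forall n, C (f n) (f n.+1).

Definition rel_d C (m : M) : Prop :=
  exists f : nat -> M, f 0%N = m /\ (forall n, C (f n) (f n.+1)) /\
    exists N, forall n, (N <= n)%N -> f n = 0.

Definition rel_sharp C (m : M) : Prop := rel_dd C m /\ rel_dd (rel_inv C) m.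

Definition rel_flat C (m : M) : Prop :=
  exists a b, (rel_dd C a /\ rel_d (rel_inv C) a) /\
              (rel_dd (rel_inv C) b /\ rel_d C b) /\ m = a + b.
End LinRel.

Definition maximal_submod (R : pzRingType) (V : lmodType R) (N : V -> Prop) : Prop :=
  is_submod N /\ (exists v, ~ N v) /\
  forall N' : V -> Prop, is_submod N' -> (forall v, N v -> N' v) ->
    (forall v, N' v -> N v) \/ (forall v, N' v).

Definition rad (R : pzRingType) (V : lmodType R) (v : V) : Prop :=
  forall N : V -> Prop, maximal_submod N -> N v.

(* An R[T,T^{-1}]-module is an R-module X together with an R-linear
   automorphism T (with inverse Tinv).  A reduction (X | rho) of (M, C). *)
Definition is_reduction (R : pzRingType) (M : lmodType R) (C : M -> M -> Prop)
    (X : lmodType R) (T Tinv : {linear X -> X}) (rho : {linear X -> M}) : Prop :=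
  cancel T Tinv /\ cancel Tinv T /\
  (forall m, rel_sharp C m <->
     exists a x, rel_flat C a /\ m = a + rho x) /\
  (forall x, C (rho x) (rho (T x))).

Definition meets_in_radical (R : pzRingType) (M : lmodType R) (C : M -> M -> Prop)
    (X : lmodType R) (rho : {linear X -> M}) : Prop :=
  forall x, rel_flat C (rho x) <-> rad x.

(* Main.v *)
Require Import Defs.
From HB Require Import structures.
From mathcomp Require Import all_boot all_order all_algebra.
From mathcomp Require Import boolp classical_sets.
From Stdlib Require Import ClassicalEpsilon.
Set Implicit Arguments. Unset Strict Implicit. Unset Printing Implicit Defensive.
Import GRing.Theory.
Local Open Scope ring_scope.

Record subY (R : pzRingType) (M : lmodType R) (Y : M -> Prop) :=
  SubY { sv : M ; sprop : Y sv }.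

Lemma subY_inj (R : pzRingType) (M : lmodType R) (Y : M -> Prop) (a b : subY Y) :
  sv a = sv b -> a = b.
Proof.
case: a b => [a pa] [b pb] /= eab; subst b; congr SubY; exact: Prop_irrelevance.
Qed.

Definition subYT (R : pzRingType) (M : lmodType R) (Y : M -> Prop) (hY : is_submod Y) := subY Y.

Section SubMod.
Variables (R : pzRingType) (M : lmodType R) (Y : M -> Prop) (hY : is_submod Y).
Local Notation subYT := (subYT hY).
HB.instance Definition _ := gen_eqMixin subYT.
HB.instance Definition _ := gen_choiceMixin subYT.

Let Y0 : Y 0. Proof. by case: hY. Qed.
Let YD u v : Y u -> Y v -> Y (u + v). Proof. by case: hY => _ [hD _]; apply: hD. Qed.
Let YZ (r : R) v : Y v -> Y (r *: v). Proof. by case: hY => _ [_ hZ]; apply: hZ. Qed.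
Let YN v : Y v -> Y (- v). Proof. by move=> h; rewrite -scaleN1r; apply: YZ. Qed.

Definition szero : subYT := SubY Y0.
Definition sadd (a b : subYT) : subYT := SubY (YD (sprop a) (sprop b)).
Definition sopp (a : subYT) : subYT := SubY (YN (sprop a)).
Definition sscale (r : R) (a : subYT) : subYT := SubY (YZ r (sprop a)).

Lemma saddA : associative sadd.
Proof. by move=> a b c; apply: subY_inj; rewrite /= addrA. Qed.
Lemma saddC : commutative sadd.
Proof. by move=> a b; apply: subY_inj; rewrite /= addrC. Qed.
Lemma sadd0 : left_id szero sadd.
Proof. by move=> a; apply: subY_inj; rewrite /= add0r. Qed.
Lemma saddN : left_inverse szero sopp sadd.
Proof. by move=> a; apply: subY_inj; rewrite /= addNr. Qed.
HB.instance Definition _ := GRing.isZmodule.Build subYT saddA saddC sadd0 saddN.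

Lemma sscaleA a b v : sscale a (sscale b v) = sscale (a * b) v.
Proof. by apply: subY_inj; rewrite /= scalerA. Qed.
Lemma sscale1 : left_id 1 sscale.
Proof. by move=> v; apply: subY_inj; rewrite /= scale1r. Qed.
Lemma sscaleDr : right_distributive sscale +%R.
Proof. by move=> r a b; apply: subY_inj; rewrite /= scalerDr. Qed.
Lemma sscaleDl v : {morph sscale^~ v: a b / a + b}.
Proof. by move=> a b; apply: subY_inj; rewrite /= scalerDl. Qed.
HB.instance Definition _ := GRing.Zmodule_isLmodule.Build R subYT sscaleA sscale1 sscaleDr sscaleDl.

Definition sval' (a : subYT) : M := sv a.
Lemma sval_lin : linear sval'.
Proof. by move=> r a b. Qed.
HB.instance Definition _ := GRing.isLinear.Build R subYT M _ sval' sval_lin.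
End SubMod.


Definition sTf (R : pzRingType) (M : lmodType R) (Y : M -> Prop) (hY : is_submod Y)
  (T : M -> M) (YT : forall y, Y y -> Y (T y))
  (TD : forall y z, Y y -> Y z -> T (y + z) = T y + T z)
  (TZ : forall (r : R) y, Y y -> T (r *: y) = r *: T y)
  (a : subYT hY) : subYT hY := SubY (YT _ (sprop a)).

Section SubLin.
Variables (R : pzRingType) (M : lmodType R) (Y : M -> Prop) (hY : is_submod Y)
  (T : M -> M) (YT : forall y, Y y -> Y (T y))
  (TD : forall y z, Y y -> Y z -> T (y + z) = T y + T z)
  (TZ : forall (r : R) y, Y y -> T (r *: y) = r *: T y).
Lemma sTf_lin : linear (@sTf R M Y hY T YT TD TZ).
Proof.
move=> r a b; apply: subY_inj => /=.
rewrite TD ?TZ //; first by case: a.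
  by case: hY => _ [_ hZ]; apply: hZ; case: a.
by case: b.
Qed.
HB.instance Definition _ := GRing.isLinear.Build R (subYT hY) (subYT hY) _ (@sTf R M Y hY T YT TD TZ) sTf_lin.
End SubLin.

Section Rad.
Variables (R : comPzRingType) (hR : semisimple_ring R) (X : lmodType R).

Lemma span_lemma (x : X) (N : X -> Prop) : is_submod N -> ~ N x ->
  (forall N', is_submod N' -> (forall v, N v -> N' v) -> ~ N' x -> forall v, N' v -> N v) ->
  forall w, exists s n, N n /\ w = s *: x + n.
Proof.
move=> [N0 [ND NZ]] Nx Nmax w.
pose L (r : R) := exists s n, N n /\ r *: w = s *: x + n.
have Li : is_ideal L.
  split; first by exists 0, 0; rewrite !scale0r addr0.
  split.
  - move=> a b [s [n [Nn ha]]] [s' [n' [Nn' hb]]]; exists (s + s'), (n + n').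
    split; first exact: ND.
    by rewrite !scalerDl ha hb addrACA.
  - move=> r a [s [n [Nn ha]]]; exists (r * s), (r *: n); split; first exact: NZ.
    by rewrite -scalerA ha scalerDr scalerA.
have [J [[J0 [JD JZ]] [dec disj]]] := hR Li.
pose N2 (u : X) := exists r n, J r /\ N n /\ u = r *: w + n.
have N2s : is_submod N2.
  split; first by exists 0, 0; rewrite scale0r addr0.
  split.
  - move=> u v [r [n [Jr [Nn ->]]]] [r' [n' [Jr' [Nn' ->]]]].
    exists (r + r'), (n + n'); split; first exact: JD.
    by split; [exact: ND | rewrite scalerDl addrACA].
  - move=> c u [r [n [Jr [Nn ->]]]]; exists (c * r), (c *: n).
    split; first exact: JZ.
    by split; [exact: NZ | rewrite scalerDr scalerA].
have NN2 v : N v -> N2 v by move=> Nv; exists 0, v; rewrite scale0r add0r.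
have Jz r : J r -> r = 0.
  move=> Jr; apply: (disj r _ Jr).
  case: (classic (N2 x)) => [[r' [n [Jr' [Nn ex]]]] | nN2x].
  - exfalso.
    have Lr' : L r'.
      exists 1, (- n); split; first by rewrite -scaleN1r; apply: NZ.
      by rewrite ex scale1r addrK.
    have r0 := disj r' Lr' Jr'.
    by apply: Nx; rewrite ex r0 scale0r add0r.
  - have Nrw : N (r *: w).
      by apply: (Nmax N2 N2s NN2 nN2x); exists r, 0; rewrite addr0.
    by exists 0, (r *: w); split => //; rewrite scale0r add0r.
have [a [b [La [Jb e1]]]] := dec 1.
rewrite (Jz b Jb) addr0 in e1.
case: La => s [n [Nn h]]; exists s, n; split => //.
by rewrite -h -e1 scale1r.
Qed.

Lemma avoid (x : X) : x <> 0 -> exists N, is_submod N /\ ~ N x /\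
  (forall N', is_submod N' -> (forall v, N v -> N' v) -> ~ N' x -> forall v, N' v -> N v).
Proof.
move=> x0.
pose P (A : set X) := (forall u v, A u -> A v -> A (u + v)) /\
  (forall (r : R) v, A v -> A (r *: v)) /\ ~ A x.
have [A [[AD [AZ Ax]] Amax]] : exists A, P A /\ forall B, (A `<` B)%classic -> ~ P B.
  apply: Zorn_bigcup => F FP Ftot; split; [|split].
  - move=> u v [B FB Bu] [B' FB' B'v].
    case: (Ftot B B' FB FB') => sub.
      by exists B' => //; apply: (FP B' FB').1 => //; exact: sub.
    by exists B => //; apply: (FP B FB).1 => //; exact: sub.
  - move=> r v [B FB Bv]; exists B => //; exact: (FP B FB).2.1.
  - by move=> [B FB Bx]; exact: (FP B FB).2.2 Bx.
have maxl B : P B -> (forall v, A v -> B v) -> forall v, B v -> A v.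
  move=> PB AB v Bv; apply: contrapT => nAv; apply: (Amax B) PB; split => //.
  by move=> /(_ v Bv).
have A0 : A 0.
  apply: (maxl (fun v => A v \/ v = 0)); last by right.
  - split; [|split].
    + move=> u v [Au|->] [Av|->]; rewrite ?addr0 ?add0r; by [left; apply: AD | left | left | right].
    + move=> r v [Av|->]; [left; exact: AZ | right; exact: scaler0].
    + by move=> [//|].
  - by move=> v Av; left.
exists A; split; first by split=> //; split.
split=> // N' [_ [N'D N'Z]] AN' N'x; apply: maxl => //.
Qed.

Lemma rad0 (v : X) : Defs.rad v -> v = 0.
Proof.
move=> rv; apply: contrapT => nv.
have [N [Ns [Nv Nmax]]] := avoid nv.
apply: (Nv); apply: (rv); split; first exact: Ns. split; first by exists v.
move=> N' N's NN'; case: (classic (N' v)) => [N'v|nN'v]; [right|left].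
- move=> w; have [s [n [Nn ->]]] := span_lemma Ns Nv Nmax w.
  case: N's => _ [N'D N'Z]; apply: N'D; [exact: N'Z | exact: NN'].
- exact: Nmax.
Qed.

Lemma rad_of0 : Defs.rad (0 : X).
Proof. by move=> N [[N0 _] _]. Qed.
End Rad.

Section Rel.
Variables (R : pzRingType) (M : lmodType R) (C : M -> M -> Prop) (hC : is_linrel C).

Lemma Csub m1 m2 n1 n2 : C m1 m2 -> C n1 n2 -> C (m1 - n1) (m2 - n2).
Proof.
case: hC => _ [hD hZ] h1 h2; rewrite -!scaleN1r; apply: hD => //; exact: hZ.
Qed.

Lemma dd0 : rel_dd C 0.
Proof. by exists (fun _ => 0); split => // n; case: hC. Qed.
Lemma ddi0 : rel_dd (rel_inv C) 0.
Proof. by exists (fun _ => 0); split => // n; case: hC. Qed.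
Lemma d0 : rel_d C 0.
Proof. by exists (fun _ => 0); split => //; split; [move=> n; case: hC | exists 0%N]. Qed.
Lemma di0 : rel_d (rel_inv C) 0.
Proof. by exists (fun _ => 0); split => //; split; [move=> n; case: hC | exists 0%N]. Qed.

Lemma flat0 : rel_flat C 0.
Proof.
exists 0, 0; split; first by split; [exact: dd0 | exact: di0].
by split; [split; [exact: ddi0 | exact: d0] | rewrite addr0].
Qed.

Lemma flat_of_C0 w : rel_dd C w -> C 0 w -> rel_flat C w.
Proof.
move=> dw c0w; exists w, 0; split.
  split => //; exists (fun n => if n is 0%N then w else 0); split => //; split.
    by case=> [|n] //=; rewrite /rel_inv; case: hC.
  by exists 1%N; case.
by split; [split; [exact: ddi0 | exact: d0] | rewrite addr0].
Qed.
End Rel.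

Unset Implicit Arguments.

Theorem proposition4p10 (R : comPzRingType) (hR : semisimple_ring R)
    (M : lmodType R) (C : M -> M -> Prop) (hC : is_linrel C) :
  (exists (X : lmodType R) (T Tinv : {linear X -> X}) (rho : {linear X -> M}),
      is_reduction C T Tinv rho /\ meets_in_radical C rho)
  <->
  (exists (Y : M -> Prop) (T Tinv : M -> M),
      is_submod Y /\
      (* R[T,T^{-1}]-module structure on Y: an R-linear automorphism T of Y *)
      (forall y, Y y -> Y (T y)) /\ (forall y, Y y -> Y (Tinv y)) /\
      (forall y z, Y y -> Y z -> T (y + z) = T y + T z) /\
      (forall (r : R) y, Y y -> T (r *: y) = r *: T y) /\
      (forall y, Y y -> Tinv (T y) = y) /\ (forall y, Y y -> T (Tinv y) = y) /\
      (* C^sharp = C^flat (+) Y (internal direct sum) *)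
      (forall m, rel_sharp C m <-> exists a y, rel_flat C a /\ Y y /\ m = a + y) /\
      (forall m, rel_flat C m -> Y m -> m = 0) /\
      (* T y = z iff z ∈ C y *)
      (forall y z, Y y -> Y z -> (T y = z <-> C y z))).
Proof.
split.
- move=> [X [T [Tinv [rho [[TK [TinvK [Hsh HC]]] Hrad]]]]].
  have Hfl x : rel_flat C (rho x) <-> x = 0.
    split; first by move/Hrad/(rad0 hR).
    by move=> ->; rewrite linear0; exact: flat0.
  have rinj : injective rho.
    move=> a b e; apply/eqP; rewrite -subr_eq0; apply/eqP; apply/Hfl.
    by rewrite linearB e subrr; exact: flat0.
  pose Y m := exists x, m = rho x.
  pose inv m := epsilon (inhabits (0 : X)) (fun x => rho x = m).
  have invK x : inv (rho x) = x.
    apply: rinj.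
    exact: (epsilon_spec (inhabits (0 : X)) (fun x' => rho x' = rho x) (ex_intro _ x erefl)).
  exists Y, (fun m => rho (T (inv m))), (fun m => rho (Tinv (inv m))).
  split.
    split; first by exists 0; rewrite linear0.
    split; first by move=> _ _ [a ->] [b ->]; exists (a + b); rewrite linearD.
    by move=> r _ [a ->]; exists (r *: a); rewrite linearZ.
  split; first by move=> y _; eexists.
  split; first by move=> y _; eexists.
  split; first by move=> _ _ [a ->] [b ->]; rewrite -linearD !invK !linearD.
  split; first by move=> r _ [a ->]; rewrite -linearZ !invK !linearZ.
  split; first by move=> _ [a ->]; rewrite !invK TK.
  split; first by move=> _ [a ->]; rewrite !invK TinvK.
  split.
    move=> m; split.
      by move/Hsh => [a [x [fa ->]]]; exists a, (rho x); split => //; split => //; exists x.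
    by move=> [a [y [fa [[x ->] ->]]]]; apply/Hsh; exists a, x.
  split; first by move=> m fl [x em]; move: fl; rewrite em => /Hfl ->; rewrite linear0.
  move=> _ _ [a ->] [b ->]; rewrite invK; split; first by move <-; exact: HC.
  move=> Cab.
  have Cw : C 0 (rho (b - T a)).
    by have := Csub hC Cab (HC a); rewrite subrr linearB.
  have : rel_flat C (rho (b - T a)).
    apply: flat_of_C0 => //.
    have : rel_sharp C (rho (b - T a)).
      by apply/Hsh; exists 0, (b - T a); split; [exact: flat0 | rewrite add0r].
    by case.
  by move/Hfl => /eqP; rewrite subr_eq0 => /eqP ->.
- move=> [Y [T [Tinv [hY [YT [YTi [TD [TZ [TiT [TTi [Hsh [Hdisj HTC]]]]]]]]]]]].
  have Tinj y z : Y y -> Y z -> T y = T z -> y = z.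
    by move=> Yy Yz e; rewrite -(TiT y Yy) e TiT.
  have YD u v : Y u -> Y v -> Y (u + v) by case: hY => _ [hD _]; apply: hD.
  have YZ (r : R) v : Y v -> Y (r *: v) by case: hY => _ [_ hZ]; apply: hZ.
  have TiD y z : Y y -> Y z -> Tinv (y + z) = Tinv y + Tinv z.
    move=> Yy Yz; apply: Tinj; [apply: YTi; exact: YD | apply: YD; exact: YTi |].
    by rewrite TD ?TTi //; [exact: YD | exact: YTi | exact: YTi].
  have TiZ (r : R) y : Y y -> Tinv (r *: y) = r *: Tinv y.
    move=> Yy; apply: Tinj; [apply: YTi; exact: YZ | apply: YZ; exact: YTi |].
    by rewrite TZ ?TTi //; [exact: YZ | exact: YTi].
  exists (subYT hY), (sTf YT TD TZ : {linear subYT hY -> subYT hY}),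
    (sTf YTi TiD TiZ : {linear subYT hY -> subYT hY}),
    (@sval' _ _ _ hY : {linear subYT hY -> M}).
  split.
    split; first by move=> a; apply: subY_inj => /=; rewrite TiT //; case: a.
    split; first by move=> a; apply: subY_inj => /=; rewrite TTi //; case: a.
    split.
      move=> m; split.
        by move/Hsh => [a [y [fa [Yy ->]]]]; exists a, (SubY Yy).
      move=> [a [x [fa ->]]]; apply/Hsh; exists a, (sv x); split => //.
      by split => //; case: x.
    move=> x /=; rewrite /sval' /=; apply/HTC; [by case: x | by apply: YT; case: x |].
    by [].
  move=> x; split.
    move=> fl; have : x = 0.
      by apply: subY_inj; apply: Hdisj fl _; case: x.
    by move ->; exact: rad_of0.
  move/(rad0 hR) => ->; exact: flat0.
Qed.
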